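(* Consider the action of $O(2)$ on $M_2(\mathbb{R})$ by conjugation. Each nontrivial irreducible $O(2)$-invariant cone of $M_2(\mathbb{R})$ is generated by exactly one of the following matrices: (0) $\begin{pmatrix}0&0\\0&0\end{pmatrix}$; (1) $I=\begin{pmatrix}1&0\\0&1\end{pmatrix}$; (2) $E=\begin{pmatrix}0&1\\-1&0\end{pmatrix}$; (3) $e_1=\begin{pmatrix}1&0\\0&-1\end{pmatrix}$; (4) $\begin{pmatrix}a+1&0\\0&a-1\end{pmatrix}$ with $a>0$; (5) $\begin{pmatrix}a+s&1\\-1&a-s\end{pmatrix}$ with $a,s\ge0$ and $(a,s)\neq(0,0)$.
   Context: $O(2)=\{P\in M_2(\mathbb{R}):PP^t=I\}$. A cone is a subset $C\subseteq M_2(\mathbb{R})$ closed under multiplication by nonzero scalars; an $O(2)$-invariant cone is a cone closed under conjugation $X\mapsto PXP^{-1}$ by all $P\in O(2)$; an irreducible $O(2)$-invariant cone is an $O(2)$-invariant cone not properly containing any $O(2)$-invariant cone. The irreducible invariant cones partition $M_2(\mathbb{R})$, and the cone generated by a matrix $X$ is the irreducible invariant cone containing $X$ (for $X\neq0$ this is $\{\lambda PXP^{-1}:\lambda\in\mathbb{R}\setminus\{0\},P\in O(2)\}$, and for $X=0$ it is $\{0\}$). *)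

(* Defs.v *)
From HB Require Import structures.
From mathcomp Require Import all_boot all_order all_algebra.
From mathcomp Require Import reals.
Set Implicit Arguments. Unset Strict Implicit. Unset Printing Implicit Defensive.
Import Order.TTheory GRing.Theory Num.Theory.
Local Open Scope ring_scope.

Section Defs.
Variable R : realType.

Definition mx2 (a b c d : R) : 'M[R]_2 :=
  \matrix_(i < 2, j < 2)
    if (i == 0 :> nat) then (if (j == 0 :> nat) then a else b)
    else (if (j == 0 :> nat) then c else d).

Definition O2 (P : 'M[R]_2) : Prop := P *m P^T = 1%:M.

Definition is_cone (C : 'M[R]_2 -> Prop) : Prop :=
  forall (l : R) (X : 'M[R]_2), l != 0 -> C X -> C (l *: X).

Definition invariant_cone (C : 'M[R]_2 -> Prop) : Prop :=
  is_cone C /\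
  forall P X, O2 P -> C X -> C (P *m X *m invmx P).

Definition irreducible_cone (C : 'M[R]_2 -> Prop) : Prop :=
  invariant_cone C /\ (exists X, C X) /\
  forall D : 'M[R]_2 -> Prop,
    invariant_cone D -> (exists X, D X) -> (forall X, D X -> C X) ->
    forall X, C X -> D X.

Definition gen_cone (X : 'M[R]_2) : 'M[R]_2 -> Prop :=
  fun Y => exists (l : R) (P : 'M[R]_2), l != 0 /\ O2 P /\ Y = l *: (P *m X *m invmx P).

Definition normal_form (X : 'M[R]_2) : Prop :=
  X = mx2 0 0 0 0 \/
  X = mx2 1 0 0 1 \/
  X = mx2 0 1 (-1) 0 \/
  X = mx2 1 0 0 (-1) \/
  (exists a : R, 0 < a /\ X = mx2 (a + 1) 0 0 (a - 1)) \/
  (exists a s : R, 0 <= a /\ 0 <= s /\ (a, s) != (0, 0) /\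
                   X = mx2 (a + s) 1 (-1) (a - s)).

End Defs.

(* Main.v *)
Require Import Defs.
From HB Require Import structures.
From mathcomp Require Import all_boot all_order all_algebra.
From mathcomp Require Import reals.
From mathcomp Require Import ring lra.
Import Order.TTheory GRing.Theory Num.Theory.
Local Open Scope ring_scope.
Set Implicit Arguments. Unset Strict Implicit.

Section S.
Variable R : realType.
Implicit Types a b c d e f g h : R.

Lemma mx2_eq a b c d a' b' c' d' : a = a' -> b = b' -> c = c' -> d = d' ->
  mx2 a b c d = mx2 a' b' c' d'.
Proof. by move=> -> -> -> ->. Qed.

Lemma mx2_eta (A : 'M[R]_2) : A = mx2 (A 0 0) (A 0 1) (A 1 0) (A 1 1).
Proof.
apply/matrixP => i j; rewrite !mxE.
by case: i => [[|[|i]] Hi] //; case: j => [[|[|j]] Hj] //=;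
  congr (A _ _); apply/val_inj.
Qed.

Lemma mx2_inj a b c d a' b' c' d' : mx2 a b c d = mx2 a' b' c' d' ->
  [/\ a = a', b = b', c = c' & d = d'].
Proof.
move=> H.
have E := fun i j => congr1 (fun M : 'M[R]_2 => M i j) H.
move: (E 0 0) (E 0 1) (E 1 0) (E 1 1); rewrite !mxE /=.
by move=> -> -> -> ->.
Qed.

Lemma mulmx2 a b c d e f g h :
  mx2 a b c d *m mx2 e f g h = mx2 (a*e+b*g) (a*f+b*h) (c*e+d*g) (c*f+d*h).
Proof.
apply/matrixP => i j; rewrite !mxE !big_ord_recr big_ord0 /= !mxE /= add0r.
by case: i => [[|[|i]] Hi] //; case: j => [[|[|j]] Hj].
Qed.

Lemma trmx2 a b c d : (mx2 a b c d)^T = mx2 a c b d.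
Proof.
apply/matrixP => i j; rewrite !mxE.
by case: i => [[|[|i]] Hi] //; case: j => [[|[|j]] Hj].
Qed.

Lemma scalemx2 l a b c d : l *: mx2 a b c d = mx2 (l*a) (l*b) (l*c) (l*d).
Proof.
apply/matrixP => i j; rewrite !mxE.
by case: i => [[|[|i]] Hi] //; case: j => [[|[|j]] Hj].
Qed.

Lemma mx2_1 : (1%:M : 'M[R]_2) = mx2 1 0 0 1.
Proof.
apply/matrixP => i j; rewrite !mxE.
by case: i => [[|[|i]] Hi] //; case: j => [[|[|j]] Hj].
Qed.

Lemma tr2 a b c d : \tr (mx2 a b c d) = a + d.
Proof. by rewrite /mxtrace !big_ord_recr big_ord0 /= !mxE /= add0r. Qed.



Lemma O2_inv (P : 'M[R]_2) : O2 P -> invmx P = P^T.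
Proof.
move=> H; have [uP _] := mulmx1_unit H.
by rewrite -[invmx P]mulmx1 -H mulmxA mulVmx // mul1mx.
Qed.

Lemma O2_trl (P : 'M[R]_2) : O2 P -> P^T *m P = 1%:M.
Proof. by move=> H; apply: mulmx1C. Qed.

Lemma O2_mul (P Q : 'M[R]_2) : O2 P -> O2 Q -> O2 (P *m Q).
Proof.
rewrite /O2 => HP HQ; rewrite trmx_mul mulmxA -(mulmxA P) HQ mulmx1 //.
Qed.

Lemma O2_1 : O2 (1%:M : 'M[R]_2).
Proof. by rewrite /O2 trmx1 mulmx1. Qed.

Lemma gen_refl (X : 'M[R]_2) : gen_cone X X.
Proof.
exists 1, 1%:M; split; first exact: oner_neq0.
split; first exact: O2_1.
by rewrite invmx1 mul1mx mulmx1 scale1r.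
Qed.

Lemma gen_trans (X Y Z : 'M[R]_2) : gen_cone X Y -> gen_cone Y Z -> gen_cone X Z.
Proof.
move=> [l [P [Hl [HP ->]]]] [m [Q [Hm [HQ ->]]]].
exists (m * l), (Q *m P); split; first by rewrite mulf_neq0.
split; first exact: O2_mul.
rewrite !O2_inv //; last exact: O2_mul.
by rewrite trmx_mul -!scalemxAr -!scalemxAl scalerA !mulmxA.
Qed.

Lemma gen_conj (P X : 'M[R]_2) : O2 P -> gen_cone X (P *m X *m P^T).
Proof.
move=> HP; exists 1, P; split; first exact: oner_neq0.
by split => //; rewrite scale1r O2_inv.
Qed.

Lemma gen_scale l (X : 'M[R]_2) : l != 0 -> gen_cone X (l *: X).
Proof.
move=> Hl; exists l, 1%:M; split => //; split; first exact: O2_1.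
by rewrite invmx1 mul1mx mulmx1.
Qed.

Lemma gen_inv (X Y : 'M[R]_2) : gen_cone X Y ->
  exists l, l != 0 /\ [/\ \tr Y = l * \tr X,
     \tr (Y *m Y) = l ^+ 2 * \tr (X *m X) &
     \tr (Y *m Y^T) = l ^+ 2 * \tr (X *m X^T)].
Proof.
move=> [l [P [Hl [HP ->]]]]; exists l; split => //.
have HT := O2_trl HP.
rewrite O2_inv //; split.
- by rewrite mxtraceZ mxtrace_mulC mulmxA HT mul1mx.
- rewrite -!scalemxAl -!scalemxAr scalerA mxtraceZ expr2; congr (_ * _).
  rewrite !mulmxA -(mulmxA _ P^T P) HT mulmx1 mxtrace_mulC !mulmxA HT mul1mx.
  by [].
- rewrite linearZ /= -!scalemxAl -!scalemxAr scalerA mxtraceZ expr2; congr (_ * _).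
  rewrite !trmx_mul trmxK !mulmxA -(mulmxA _ P^T P) HT mulmx1.
  by rewrite mxtrace_mulC !mulmxA HT mul1mx.
Qed.

Lemma irr_closed (C : 'M[R]_2 -> Prop) X Y :
  irreducible_cone C -> C X -> gen_cone X Y -> C Y.
Proof.
move=> [[Hc Hi] _] HX [l [P [Hl [HP ->]]]].
by apply: Hc => //; apply: Hi.
Qed.

Lemma irr_gen (C : 'M[R]_2 -> Prop) X :
  irreducible_cone C -> C X -> forall Y, gen_cone X Y <-> C Y.
Proof.
move=> HC HX Y; split; first exact: irr_closed.
have [_ [_ H]] := HC; apply: H; last first.
- by move=> Z; apply: irr_closed.
- by exists X; apply: gen_refl.
split.
- move=> m Z Hm HZ; apply: gen_trans HZ _; exact: gen_scale.
- move=> P Z HP HZ; apply: gen_trans HZ _; rewrite O2_inv //; exact: gen_conj.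
Qed.


Lemma gen_inv2 a b c d a' b' c' d' :
  gen_cone (mx2 a b c d) (mx2 a' b' c' d') ->
  exists l, l != 0 /\ [/\ a' + d' = l * (a + d),
     (a'*a'+b'*c') + (c'*b'+d'*d') = l ^+ 2 * ((a*a+b*c) + (c*b+d*d)) &
     (a'*a'+b'*b') + (c'*c'+d'*d') = l ^+ 2 * ((a*a+b*b) + (c*c+d*d))].
Proof.
move/gen_inv => [l [Hl []]]; rewrite !trmx2 !mulmx2 !tr2 => H1 H2 H3.
by exists l.
Qed.

Lemma nf_uniq (N N' : 'M[R]_2) : normal_form N -> normal_form N' ->
  gen_cone N N' -> N' = N.
Proof.
move=> HN HN'.
case: HN => [->|[->|[->|[->|[[a [Ha ->]]|[a [s [Ha [Hs [Has ->]]]]]]]]]];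
case: HN' => [->|[->|[->|[->|[[a' [Ha' ->]]|[a' [s' [Ha' [Hs' [Has' ->]]]]]]]]]];
move/gen_inv2 => [l [Hl [H1 H2 H3]]] //.
all: try (exfalso; move: Hl => /eqP Hl; nra).
- exfalso; have ha : a' = 0 by nra.
  have hs : s' = 0 by nra.
  by move: Has'; rewrite ha hs eqxx.
- have hl : (l - 1) * (l + 1) = 0 by nra.
  move/eqP: hl; rewrite mulf_eq0 => /orP [] /eqP hl.
  + have E : l = 1 by lra.
    rewrite E in H1; have -> : a' = a by lra.
    by [].
  + have E : l = -1 by lra.
    rewrite E in H1; exfalso; lra.
- exfalso; have ha : a = 0 by nra.
  have hs : s = 0 by nra.
  by move: Has; rewrite ha hs eqxx.
- have hl : (l - 1) * (l + 1) = 0 by nra.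
  move/eqP: hl; rewrite mulf_eq0 => /orP [] /eqP hl.
  + have E : l = 1 by lra.
    rewrite E in H1 H2 H3.
    have -> : a' = a by lra.
    have -> : s' = s by nra.
    by [].
  + have E : l = -1 by lra.
    rewrite E in H1 H2 H3.
    have -> : a' = a by nra.
    have -> : s' = s by nra.
    by [].
Qed.


Definition G al be r : 'M[R]_2 := mx2 (al + r) be (- be) (al - r).

Lemma O2_mx2 c d e f : c*c + d*d = 1 -> e*e + f*f = 1 -> c*e + d*f = 0 ->
  O2 (mx2 c d e f).
Proof.
move=> H1 H2 H3; rewrite /O2 trmx2 mulmx2 mx2_1.
by apply: mx2_eq => //; rewrite (mulrC e) (mulrC f).
Qed.

Lemma G_scale k al be r : k != 0 -> gen_cone (G al be r) (G (k*al) (k*be) (k*r)).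
Proof.
move=> Hk; have := gen_scale (G al be r) Hk; rewrite /G scalemx2.
by congr (gen_cone _ _); apply: mx2_eq; ring.
Qed.

Lemma G_negr al be r : gen_cone (G al be r) (G al be (-r)).
Proof.
have HP : O2 (mx2 0 (-1) 1 0 : 'M[R]_2) by apply: O2_mx2; ring.
have := gen_conj (G al be r) HP; rewrite /G trmx2 !mulmx2.
by congr (gen_cone _ _); apply: mx2_eq; ring.
Qed.

Lemma G_negb al be r : gen_cone (G al be r) (G al (-be) r).
Proof.
have HP : O2 (mx2 1 0 0 (-1) : 'M[R]_2) by apply: O2_mx2; ring.
have := gen_conj (G al be r) HP; rewrite /G trmx2 !mulmx2.
by congr (gen_cone _ _); apply: mx2_eq; ring.
Qed.

Lemma G_abs al be r : exists a b s, [/\ 0 <= a, 0 <= b, 0 <= s &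
  gen_cone (G al be r) (G a b s)].
Proof.
have [a [b [s [Ha H]]]] : exists a b s, 0 <= a /\ gen_cone (G al be r) (G a b s).
  case: (lerP 0 al) => h; first by exists al, be, r; split => //; exact: gen_refl.
  exists (-1 * al), (-1 * be), (-1 * r); split; first lra.
  by apply: G_scale; rewrite oppr_eq0 oner_eq0.
have [b' [Hb H']] : exists b', 0 <= b' /\ gen_cone (G al be r) (G a b' s).
  case: (lerP 0 b) => h; first by exists b.
  exists (-b); split; first lra.
  exact: gen_trans H (G_negb _ _ _).
case: (lerP 0 s) => h; first by exists a, b', s.
exists a, b', (-s); split => //; first lra.
exact: gen_trans H' (G_negr _ _ _).
Qed.

Lemma G_normal a b s : 0 <= a -> 0 <= b -> 0 <= s ->
  exists N, normal_form N /\ gen_cone (G a b s) N.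
Proof.
move=> Ha Hb Hs.
case: (ltrP 0 b) => hb.
  have hb0 : b^-1 != 0 by rewrite invr_eq0 gt_eqF.
  have HH := G_scale a b s hb0.
  rewrite mulVf ?gt_eqF // in HH.
  have ha' : 0 <= b^-1 * a by rewrite mulr_ge0 // invr_ge0 ltW.
  have hs' : 0 <= b^-1 * s by rewrite mulr_ge0 // invr_ge0 ltW.
  case: (eqVneq (b^-1 * a, b^-1 * s) (0, 0)) => hz.
    case: hz => h1 h2; rewrite h1 h2 in HH.
    exists (mx2 0 1 (-1) 0); split; first by right; right; left.
    by move: HH; rewrite /G !addr0 ?subr0.
  exists (G (b^-1 * a) 1 (b^-1 * s)); split => //.
  by right; right; right; right; right; exists (b^-1 * a), (b^-1 * s).
have hb0 : b = 0 by apply/eqP; rewrite eq_le hb.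
rewrite hb0.
case: (ltrP 0 s) => hs.
  have hs0 : s^-1 != 0 by rewrite invr_eq0 gt_eqF.
  have HH := G_scale a 0 s hs0.
  rewrite mulVf ?gt_eqF // mulr0 in HH.
  case: (ltrP 0 a) => ha.
    exists (G (s^-1 * a) 0 1); split => //.
    right; right; right; right; left; exists (s^-1 * a); split.
      by rewrite mulr_gt0 // invr_gt0.
    by rewrite /G oppr0.
  have ha0 : a = 0 by apply/eqP; rewrite eq_le ha.
  exists (mx2 1 0 0 (-1)); split; first by right; right; right; left.
  by move: HH; rewrite ha0 mulr0 /G !add0r ?sub0r ?oppr0.
have hs0 : s = 0 by apply/eqP; rewrite eq_le hs.
rewrite hs0.
case: (ltrP 0 a) => ha.
  have ha0 : a^-1 != 0 by rewrite invr_eq0 gt_eqF.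
  have HH := G_scale a 0 0 ha0.
  rewrite mulVf ?gt_eqF // mulr0 in HH.
  exists (mx2 1 0 0 1); split; first by right; left.
  by move: HH; rewrite /G !addr0 ?subr0 ?oppr0.
have ha0 : a = 0 by apply/eqP; rewrite eq_le ha.
exists (mx2 0 0 0 0); split; first by left.
rewrite ha0 /G addr0 subr0 oppr0; exact: gen_refl.
Qed.


Lemma half_angle (C2 S2 : R) : C2 ^+ 2 + S2 ^+ 2 = 1 ->
  exists c s, [/\ c ^+ 2 + s ^+ 2 = 1, c ^+ 2 - s ^+ 2 = C2 & 2 * c * s = S2].
Proof.
move=> H.
case: (eqVneq C2 (-1)) => hC.
  have hS : S2 = 0 by rewrite hC in H; nra.
  by exists 0, 1; split; rewrite ?hC ?hS; ring.
have hC1 : 0 < 1 + C2.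
  have : -1 <= C2 by nra.
  by rewrite le_eqVlt eq_sym (negbTE hC) /=; lra.
set u := Num.sqrt ((1 + C2) / 2).
have hu : u ^+ 2 = (1 + C2) / 2 by rewrite sqr_sqrtr //; lra.
have hu0 : u != 0 by apply/eqP => h; rewrite h in hu; lra.
have hS2 : S2 ^+ 2 = 1 - C2 ^+ 2 by lra.
exists u, (S2 / (2 * u)); split.
- rewrite expr_div_n exprMn hS2 hu; field; lra.
- rewrite expr_div_n exprMn hS2 hu; field; lra.
- by field.
Qed.

Lemma unit_aux (p q r : R) : r != 0 -> r ^+ 2 = p ^+ 2 + q ^+ 2 ->
  (p / r) ^+ 2 + (- q / r) ^+ 2 = 1.
Proof.
move=> hr0 hr; rewrite !expr_div_n sqrrN -mulrDl -hr divff //.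
by rewrite expf_neq0.
Qed.

Lemma rot_identity (al be r c s : R) :
  let P := mx2 c (-s) s c in
  P *m mx2 (al + r * (c^+2 - s^+2)) (- r * (2*c*s) + be)
           (- r * (2*c*s) - be) (al - r * (c^+2 - s^+2)) *m P^T =
  G (al * (c^+2 + s^+2)) (be * (c^+2 + s^+2)) (r * (c^+2 + s^+2)^+2).
Proof. by rewrite /= trmx2 !mulmx2 /G; apply: mx2_eq; ring. Qed.

Lemma to_G (X : 'M[R]_2) : exists al be r, gen_cone X (G al be r).
Proof.
rewrite [X]mx2_eta.
set x11 := X 0 0; set x12 := X 0 1; set x21 := X 1 0; set x22 := X 1 1.
set al := (x11 + x22) / 2; set be := (x12 - x21) / 2.
set p := (x11 - x22) / 2; set q := (x12 + x21) / 2.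
set r := Num.sqrt (p ^+ 2 + q ^+ 2).
have hr : r ^+ 2 = p ^+ 2 + q ^+ 2 by rewrite sqr_sqrtr // addr_ge0 // sqr_ge0.
have [c [s [H1 H2 H3]]] : exists c s, [/\ c ^+ 2 + s ^+ 2 = 1,
    r * (c ^+ 2 - s ^+ 2) = p & - r * (2 * c * s) = q].
  case: (eqVneq r 0) => hr0.
    rewrite hr0 expr0n /= in hr.
    have hp : p = 0 by nra.
    have hq : q = 0 by nra.
    by exists 1, 0; split; rewrite ?hr0 ?hp ?hq; ring.
  have HH : (p / r) ^+ 2 + (- q / r) ^+ 2 = 1.
    exact: unit_aux.
  have [c [s [H1 H2 H3]]] := half_angle HH.
  exists c, s; split => //.
  + by rewrite H2; field.
  + by rewrite H3; field.
exists al, be, r.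
have HP : O2 (mx2 c (-s) s c).
  by apply: O2_mx2; nra.
have := gen_conj (mx2 (al + r * (c^+2 - s^+2)) (- r * (2*c*s) + be)
           (- r * (2*c*s) - be) (al - r * (c^+2 - s^+2))) HP.
rewrite rot_identity H1 expr1n !mulr1 H2 H3.
congr (gen_cone _ _); apply: mx2_eq; rewrite /al /be /p /q; by field.
Qed.

End S.

Theorem mainTheorem10 (R : realType) (C : 'M[R]_2 -> Prop) :
  irreducible_cone C ->
  exists! X : 'M[R]_2, normal_form X /\ (forall Y, gen_cone X Y <-> C Y).
Proof.
move=> HC.
have [_ [[X HX] _]] := HC.
have [al [be [r H1]]] := to_G X.
have [a [b [s [Ha Hb Hs H2]]]] := G_abs al be r.
have [N [HN H3]] := G_normal Ha Hb Hs.
have HCN : C N.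
  apply: (irr_closed HC HX); apply: gen_trans H1 _; exact: gen_trans H2 H3.
exists N; split; first by split => //; exact: irr_gen.
move=> N' [HN' HG'].
have : C N' by apply/HG'; exact: gen_refl.
move/(irr_gen HC HCN) => HNN'.
by apply/esym/nf_uniq.
Qed.
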